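(* Let $\mathbf{u}$ be quasi-definite with SMOP $(P_n)$ and associated polynomials of the first kind $(P^{(1)}_n)$, let $c\in\mathbb{C}$ with $P_n(c)\ne0$ for all $n\ge0$, and let $\widetilde{\mathbf{u}}=(x-c)\mathbf{u}$ (which is then quasi-definite, with $\widetilde{\mathbf{u}}_0\neq0$), with SMOP $(\widetilde P_n)$ and associated polynomials of the first kind $(\widetilde P^{(1)}_n)$. Define $$R_n(x)=\frac{\mathbf{u}_0}{\widetilde{\mathbf{u}}_0}\Big[(x-c)P^{(1)}_n(x)-P_{n+1}(x)\Big],\quad n\ge-1 .$$ Then for every $n\ge1$, $$(x-c)\,\widetilde P^{(1)}_{n-1}(x)=R_n(x)-\frac{P_{n+1}(c)}{P_n(c)}\,R_{n-1}(x).$$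
   Context: Linear functionals on complex polynomials, moments $\mathbf{u}_n=\langle\mathbf{u},x^n\rangle$, $\langle(x-c)\mathbf{u},p\rangle=\langle\mathbf{u},(x-c)p\rangle$. Quasi-definite: all leading principal Hankel minors of the moments nonzero; a quasi-definite functional has a unique sequence of monic orthogonal polynomials (SMOP) $(P_n)$ with $xP_n=P_{n+1}+b_nP_n+a_nP_{n-1}$, $P_{-1}=0$, $P_0=1$, $a_n\neq0$. Associated polynomials of the first kind: monic, $xP^{(1)}_n=P^{(1)}_{n+1}+b_{n+1}P^{(1)}_n+a_{n+1}P^{(1)}_{n-1}$, $P^{(1)}_{-1}=0$, $P^{(1)}_0=1$; equivalently $P^{(1)}_{n-1}(x)=\frac{1}{\mathbf{u}_0}\langle\mathbf{u}_y,\frac{P_n(x)-P_n(y)}{x-y}\rangle$. The SMOP of $(x-c)\mathbf{u}$ is $\widetilde P_n(x)=\big(P_{n+1}(x)-\frac{P_{n+1}(c)}{P_n(c)}P_n(x)\big)/(x-c)$. *)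

(* Defs.v *)
From HB Require Import structures.
From mathcomp Require Import all_boot all_order all_algebra reals.
From mathcomp.real_closed Require Import complex.
Set Implicit Arguments. Unset Strict Implicit. Unset Printing Implicit Defensive.
Import Order.TTheory GRing.Theory Num.Theory.
Local Open Scope ring_scope.

(* A linear functional u on polynomials is represented by its moment sequence
   m : nat -> F, m n = <u, x^n>. *)
Definition lfun_app {F : fieldType} (m : nat -> F) (p : {poly F}) : F :=
  \sum_(i < size p) p`_i * m i.

(* moments of (x - c) u : <(x-c)u, x^n> = <u, x^(n+1)> - c <u, x^n> *)
Definition shift_mom {F : fieldType} (c : F) (m : nat -> F) : nat -> F :=
  fun n => m n.+1 - c * m n.

Definition quasi_definite {F : fieldType} (m : nat -> F) : Prop :=
  forall n : nat, \det (\matrix_(i < n.+1, j < n.+1) m (i + j)%N) != 0.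

Definition is_SMOP {F : fieldType} (m : nat -> F) (P : nat -> {poly F}) : Prop :=
  (forall n, P n \is monic) /\ (forall n, size (P n) = n.+1) /\
  (forall n k, k != n -> lfun_app m (P n * P k) = 0) /\
  (forall n, lfun_app m (P n * P n) != 0).

(* Associated polynomials of the first kind:
   P^(1)_n(x) = (1/u_0) <u_y, (P_{n+1}(x) - P_{n+1}(y)) / (x - y)>,
   using (x^k - y^k)/(x - y) = \sum_(j < k) x^j y^(k-1-j). *)
Definition assoc1 {F : fieldType} (m : nat -> F) (P : nat -> {poly F}) (n : nat)
  : {poly F} :=
  (m 0%N)^-1 *: \sum_(k < size (P n.+1))
      (P n.+1)`_k *: \sum_(j < k) (m (k.-1 - j)%N *: 'X^j).

(* Main.v *)
Require Import Defs.
From HB Require Import structures.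
From mathcomp Require Import all_boot all_order all_algebra reals.
From mathcomp.real_closed Require Import complex.
From mathcomp Require Import ring.
Import Order.TTheory GRing.Theory Num.Theory.
Local Open Scope ring_scope.

Section Gen.
Variable F : fieldType.

Definition lin_of {V : lmodType F} (f : nat -> V) (p : {poly F}) : V :=
  \sum_(i < size p) p`_i *: f i.

Lemma lin_ofE {V : lmodType F} (f : nat -> V) (p : {poly F}) N : (size p <= N)%N ->
  lin_of f p = \sum_(i < N) p`_i *: f i.
Proof.
move=> hN; rewrite /lin_of -(subnKC hN) big_split_ord /=.
rewrite [X in _ + X]big1 ?addr0 // => i _.
by rewrite nth_default ?scale0r // leq_addr.
Qed.

Lemma lin_ofD {V : lmodType F} (f : nat -> V) (p q : {poly F}) :
  lin_of f (p + q) = lin_of f p + lin_of f q.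
Proof.
rewrite (lin_ofE f _ _ (size_polyD p q)) (lin_ofE f p _ (leq_maxl (size p) (size q))).
rewrite (lin_ofE f q _ (leq_maxr (size p) (size q))) -big_split.
by apply: eq_bigr => i _; rewrite coefD scalerDl.
Qed.

Lemma lin_ofZ {V : lmodType F} (f : nat -> V) a (p : {poly F}) :
  lin_of f (a *: p) = a *: lin_of f p.
Proof.
rewrite (lin_ofE f _ _ (size_scale_leq a p)) /lin_of scaler_sumr.
by apply: eq_bigr => i _; rewrite coefZ scalerA.
Qed.

Lemma lin_of0 {V : lmodType F} (f : nat -> V) : lin_of f 0 = 0.
Proof. by rewrite /lin_of size_poly0 big_ord0. Qed.

Lemma lin_ofB {V : lmodType F} (f : nat -> V) (p q : {poly F}) :
  lin_of f (p - q) = lin_of f p - lin_of f q.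
Proof. by rewrite lin_ofD; congr (_ + _); rewrite -[- q]scaleN1r lin_ofZ scaleN1r. Qed.

Lemma lin_of_sum {V : lmodType F} (f : nat -> V) n (G : 'I_n -> {poly F}) :
  lin_of f (\sum_(i < n) G i) = \sum_(i < n) lin_of f (G i).
Proof. exact: (big_morph _ (lin_ofD f) (lin_of0 f)). Qed.

Lemma lin_ofXn {V : lmodType F} (f : nat -> V) k : lin_of f 'X^k = f k.
Proof.
rewrite /lin_of size_polyXn big_ord_recr /= coefXn eqxx scale1r big1 ?add0r //.
by move=> i _; rewrite coefXn ltn_eqF // scale0r.
Qed.

Lemma lin_of_mulXc {V : lmodType F} (f : nat -> V) c (p : {poly F}) :
  lin_of f (('X - c%:P) * p) = lin_of (fun i => f i.+1 - c *: f i) p.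
Proof.
rewrite -[p in LHS]coefK poly_def mulr_sumr lin_of_sum [RHS]/lin_of.
apply: eq_bigr => i _.
rewrite -scalerAr lin_ofZ mulrBl -exprS mul_polyC lin_ofB lin_ofZ !lin_ofXn.
by [].
Qed.

Lemma lin_ofX (p : {poly F}) : lin_of (fun i => 'X^i) p = p.
Proof. by rewrite /lin_of -poly_def coefK. Qed.

Lemma lin_of_subf {V : lmodType F} (f g : nat -> V) (p : {poly F}) :
  lin_of f p - lin_of g p = lin_of (fun i => f i - g i) p.
Proof. by rewrite /lin_of -sumrB; apply: eq_bigr => i _; rewrite scalerBr. Qed.

Lemma lfun_appE (m : nat -> F) p : lfun_app m p = lin_of (m : nat -> F^o) p.
Proof. by []. Qed.

End Gen.
Arguments lin_of {F V}.

Section Gen2.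
Variable F : fieldType.

Lemma lfunD (m : nat -> F) p q : lfun_app m (p + q) = lfun_app m p + lfun_app m q.
Proof. by rewrite !lfun_appE lin_ofD. Qed.
Lemma lfunB (m : nat -> F) p q : lfun_app m (p - q) = lfun_app m p - lfun_app m q.
Proof. by rewrite !lfun_appE lin_ofB. Qed.
Lemma lfunZ (m : nat -> F) a p : lfun_app m (a *: p) = a * lfun_app m p.
Proof. by rewrite !lfun_appE lin_ofZ. Qed.
Lemma lfun_sum (m : nat -> F) n (G : 'I_n -> {poly F}) :
  lfun_app m (\sum_(i < n) G i) = \sum_(i < n) lfun_app m (G i).
Proof. by rewrite !lfun_appE lin_of_sum. Qed.
Lemma lfun_shift (m : nat -> F) c p :
  lfun_app (shift_mom c m) p = lfun_app m (('X - c%:P) * p).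
Proof. by rewrite !lfun_appE lin_of_mulXc. Qed.

Lemma basis_exp {Q : nat -> {poly F}} : (forall k, size (Q k) = k.+1) ->
  forall N (p : {poly F}), (size p <= N)%N ->
  exists a : nat -> F, p = \sum_(k < N) a k *: Q k.
Proof.
move=> hQ; elim=> [|N IH] p hp.
  exists (fun _ => 0); rewrite big_ord0.
  by apply/eqP; rewrite -size_poly_eq0 -leqn0.
set al := p`_N / lead_coef (Q N).
have hl : lead_coef (Q N) != 0 by rewrite lead_coef_eq0 -size_poly_eq0 hQ.
have hs : (size (p - al *: Q N)%R <= N)%N.
  apply/leq_sizeP => j; rewrite leq_eqVlt => /orP [/eqP <-|hj].
    have hQN : (Q N)`_N = lead_coef (Q N) by rewrite lead_coefE hQ.
    rewrite coefB coefZ hQN /al divfK //; exact: subrr.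
  have h1 : p`_j = 0 by apply: nth_default; exact: leq_trans hp hj.
  have h2 : (Q N)`_j = 0 by apply: nth_default; rewrite hQ.
  by rewrite coefB coefZ h1 h2 mulr0 subrr.
have [a ha] := IH _ hs.
exists (fun k => if k == N then al else a k).
rewrite big_ord_recr /= eqxx.
rewrite -[p](subrK (al *: Q N)) ha; congr (_ + _).
by apply: eq_bigr => i _; rewrite ltn_eqF.
Qed.

Lemma smop_orth {m : nat -> F} {P} : is_SMOP m P ->
  forall n (p : {poly F}), (size p <= n)%N -> lfun_app m (P n * p) = 0.
Proof.
move=> [_ [hs [ho _]]] n p hp.
have [a ->] := basis_exp hs _ _ hp.
rewrite mulr_sumr lfun_sum big1 // => i _.
by rewrite -scalerAr lfunZ ho ?mulr0 // ltn_eqF.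
Qed.

Lemma shift_smop (m : nat -> F) P Pt c : is_SMOP m P ->
  (forall n, (P n).[c] != 0) -> is_SMOP (shift_mom c m) Pt ->
  forall n, ('X - c%:P) * Pt n = P n.+1 - ((P n.+1).[c] / (P n).[c]) *: P n.
Proof.
move=> hP hc hPt n.
have hP' := hP; have hPt' := hPt.
move: hP' hPt' => [hm [hs [ho hn]]] [hmt [hst _]].
set S := ('X - c%:P) * Pt n - P n.+1.
have hmon : ('X - c%:P) * Pt n \is monic by rewrite monicMl // monicXsubC.
have hsz : size (('X - c%:P) * Pt n) = n.+2.
  by rewrite size_Mmonic ?hst ?size_XsubC // monic_neq0 // monicXsubC.
have hSs : (size S <= n.+1)%N.
  apply/leq_sizeP => j; rewrite leq_eqVlt => /orP [/eqP <-|hj].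
    rewrite coefB.
    have := monicP hmon; rewrite lead_coefE hsz /= => ->.
    by have := monicP (hm n.+1); rewrite lead_coefE hs /= => ->; rewrite subrr.
  have h1 : (('X - c%:P) * Pt n)`_j = 0 by apply: nth_default; rewrite hsz.
  have h2 : (P n.+1)`_j = 0 by apply: nth_default; rewrite hs.
  by rewrite coefB h1 h2 subrr.
have [a ha] := basis_exp hs _ _ hSs.
have ha0 : forall j, (j < n)%N -> a j = 0.
  move=> j hj.
  have h1 : lfun_app m (S * P j) = 0.
    rewrite /S mulrBl lfunB -mulrA -lfun_shift (smop_orth hPt) ?hs //.
    by rewrite (smop_orth hP) ?hs ?subrr // ltnW.
  have hjn : (j < n.+1)%N by apply: ltnW.
  move: h1; rewrite ha mulr_suml lfun_sum (bigD1 (Ordinal hjn)) //= big1.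
    rewrite addr0 -scalerAl lfunZ => /eqP; rewrite mulf_eq0 (negbTE (hn j)) orbF.
    by move/eqP.
  move=> k hk; rewrite -scalerAl lfunZ ho ?mulr0 //.
  by apply: contra hk => /eqP hk; apply/eqP; apply: val_inj.
have hS : S = a n *: P n.
  rewrite ha big_ord_recr /= big1 ?add0r // => i _.
  by rewrite ha0 ?scale0r.
have hev : S.[c] = a n * (P n).[c] by rewrite hS hornerZ.
move: hev; rewrite /S hornerD hornerN hornerM hornerXsubC subrr mul0r add0r.
move=> hev.
have -> : (P n.+1).[c] / (P n).[c] = - a n.
  by apply: (mulIf (hc n)); rewrite divfK // mulNr -hev opprK.
by rewrite scaleNr opprK -hS /S [RHS]addrC subrK.
Qed.

End Gen2.

Section Gen3.
Variable F : fieldType.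

Definition gA (m : nat -> F) (k : nat) : {poly F} :=
  \sum_(j < k) m (k.-1 - j)%N *: 'X^j.

Lemma assoc1E (m : nat -> F) P n :
  assoc1 m P n = (m 0%N)^-1 *: lin_of (gA m) (P n.+1).
Proof. by []. Qed.

Lemma gshift (m : nat -> F) c i :
  gA (shift_mom c m) i = gA m i.+1 - c *: gA m i - m 0%N *: 'X^i.
Proof.
rewrite /gA big_ord_recr /= subnn [RHS]addrAC addrK.
rewrite scaler_sumr -sumrB.
case: i => [|i]; first by rewrite !big_ord0.
apply: eq_bigr => j _ /=.
rewrite /shift_mom scalerA -scalerBl; congr (_ *: _).
by rewrite -subSn // -ltnS.
Qed.

Lemma identI (m : nat -> F) c (T : {poly F}) :
  lin_of (gA (shift_mom c m)) T =
  lin_of (gA m) (('X - c%:P) * T) - m 0%N *: T.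
Proof.
have -> : m 0%N *: T = lin_of (fun i => m 0%N *: 'X^i) T.
  rewrite -[T in LHS]lin_ofX /lin_of scaler_sumr.
  by apply: eq_bigr => i _; rewrite !scalerA mulrC.
rewrite lin_of_mulXc lin_of_subf /lin_of.
by apply: eq_bigr => i _; rewrite gshift.
Qed.

End Gen3.
Arguments gA {F}.

Theorem mainTheorem9 (R : realType) (m : nat -> R[i]) (P Pt : nat -> {poly R[i]})
  (c : R[i]) :
  quasi_definite m -> is_SMOP m P ->
  (forall n, (P n).[c] != 0) ->
  is_SMOP (shift_mom c m) Pt ->
  let Rn := fun n : nat =>
    (m 0%N / shift_mom c m 0%N) *: (('X - c%:P) * assoc1 m P n - P n.+1) in
  forall n : nat, (1 <= n)%N ->
    ('X - c%:P) * assoc1 (shift_mom c m) Pt n.-1 =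
    Rn n - ((P n.+1).[c] / (P n).[c]) *: Rn n.-1.
Proof.
move=> hq hP hc hPt Rn [//|k] _ /=.
have hm0 : m 0%N != 0.
  by have := hq 0%N; rewrite det_mx11 mxE.
have hM := @shift_smop _ _ _ _ _ hP hc hPt k.+1.
rewrite /Rn /= !assoc1E identI hM lin_ofB lin_ofZ.
set r := _ / _.
set A2 := lin_of (gA m) (P k.+2).
set A1 := lin_of (gA m) (P k.+1).
set s := shift_mom c m 0%N.
set X := 'X - c%:P.
rewrite -mul_polyC polyCM in hM.
rewrite -!mul_polyC !polyCM.
set s' := (s^-1)%:P. set m' := (m 0%N)%:P. set u' := ((m 0%N)^-1)%:P.
set r2 := ((P k.+2).[c])%:P. set r1 := ((P k.+1).[c]^-1)%:P.
set T := Pt k.+1.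
have e1 : m' * u' = 1 by rewrite -polyCM divff.
rewrite (_ : X * (s' * (A2 - r2 * r1 * A1 - m' * T)) =
   s' * (X * A2 - r2 * r1 * (X * A1)) - s' * m' * (X * T)); last by ring.
rewrite hM.
apply/eqP; rewrite -subr_eq0; apply/eqP.
rewrite (_ : _ - _ = (1 - m' * u') * (s' * X * (A2 - r2 * r1 * A1))).
  by rewrite e1 subrr mul0r.
ring.
Qed.
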